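(* Let $R$ be a commutative ring of characteristic zero and $P \subseteq R$ a subsemiring (i.e. $P + P \subseteq P$, $PP \subseteq P$, $0, 1 \in P$). Suppose that there is $v \in P$ such that for every $a \in R$ there is $p \in \mathbb{N}[X]$ with $p(v) - a \in P$. Then for every $a \in R$, the following are equivalent: (1) $f(a) \geq 0$ for every ring homomorphism $f : R \to \mathbb{R}$ with $f(P) \subseteq \mathbb{R}_+$. (2) For every $r \in \mathbb{R}_+$ and $\varepsilon > 0$, there exist a polynomial $q \in \mathbb{N}[X]$, an element $w \in P$ and $n \in \mathbb{N}_{>0}$ such that $q(r) \leq \varepsilon n$ and $(1 + w)\,(n\,a + q(v)) \in P$.
   Context: $\mathbb{N}_{>0}$ denotes the positive integers; $q(v)$ denotes evaluation of $q$ at $v$ in $R$ and $q(r)$ evaluation at the real number $r$. *)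

(* Defs.v *)
From HB Require Import structures.
From mathcomp Require Import all_boot all_order all_algebra.
From mathcomp Require Export reals.
Set Implicit Arguments. Unset Strict Implicit. Unset Printing Implicit Defensive.
Import Order.TTheory GRing.Theory Num.Theory.
Local Open Scope ring_scope.

(* A polynomial in N[X] is represented by its coefficient list
   (p = [:: c_0; c_1; ...; c_d] means c_0 + c_1 X + ... + c_d X^d, c_i : nat).
   [neval p x] is its evaluation at x in any (commutative) semiring S,
   coefficients embedded via n%:R. *)
Definition neval (S : pzSemiRingType) (p : seq nat) (x : S) : S :=
  \sum_(i < size p) (nth 0%N p i)%:R * x ^+ i.

(* Main.v *)
Require Import Defs.
From HB Require Import structures.
From mathcomp Require Import all_boot all_order all_algebra.
From mathcomp Require Import reals.
From mathcomp Require Import boolp classical_sets.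
From mathcomp Require Import ring lra zify.
Import Order.TTheory GRing.Theory Num.Theory.
Local Open Scope ring_scope.
Lemma neval_nil (S : pzSemiRingType) (x : S) : neval [::] x = 0.
Proof. by rewrite /neval big_ord0. Qed.

Lemma neval_cons (S : comPzSemiRingType) c s (x : S) :
  neval (c :: s) x = c%:R + x * neval s x.
Proof.
rewrite /neval /= big_ord_recl /= expr0 mulr1; congr (_ + _).
rewrite mulr_sumr; apply: eq_bigr => i _.
by rewrite /bump /= exprS mulrCA.
Qed.

Lemma neval_rmorph (S T : comPzSemiRingType) (f : {rmorphism S -> T}) q x :
  f (neval q x) = neval q (f x).
Proof.
elim: q => [|c s IH]; first by rewrite !neval_nil rmorph0.
by rewrite !neval_cons rmorphD rmorphM IH rmorph_nat.
Qed.

Lemma dens (rT : realType) (s u : rT) : s < u ->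
  exists m : nat, exists k : int, (0 < m)%N /\ s < k%:~R / m%:R < u.
Proof.
move=> su.
have d0 : 0 < u - s by rewrite subr_gt0.
set m := (Num.bound ((u - s)^-1)).+1.
have hm : (u - s)^-1 < m%:R.
  apply: (lt_le_trans (archi_boundP _)); first by rewrite invr_ge0 ltW.
  by rewrite ler_nat.
have m0 : 0 < m%:R :> rT by rewrite ltr0n.
exists m, (Num.floor (m%:R * s) + 1); split => //.
apply/andP; split.
  by rewrite ltr_pdivlMr // mulrC floorD1_gt.
rewrite ltr_pdivrMr // intrD.
have := floor_le (m%:R * s).
have : 1 < (u - s) * m%:R by rewrite -ltr_pdivrMl // mulr1.
nra.
Qed.

Lemma lediv (rT : realType) (k k' : int) (m m' : nat) : (0 < m)%N -> (0 < m')%N ->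
  (k' * m%:Z <= k * m'%:Z)%R -> k'%:~R / m'%:R <= k%:~R / m%:R :> rT.
Proof.
move=> m0 m'0 h.
rewrite ler_pdivrMr ?ltr0n // mulrAC ler_pdivlMr ?ltr0n //.
rewrite -[m%:R]/((m%:Z)%:~R) -[m'%:R]/((m'%:Z)%:~R) -!intrM ler_int.
by [].
Qed.

Section Main.
Variables (R : comNzRingType) (rT : realType) (P : {pred R}).
Hypotheses (P0 : 0 \in P) (P1 : 1 \in P)
  (PD : forall x y, x \in P -> y \in P -> x + y \in P)
  (PM : forall x y, x \in P -> y \in P -> x * y \in P).
Variable v : R.
Hypotheses (vP : v \in P) (hv : forall a : R, exists p : seq nat, neval p v - a \in P).

Local Open Scope classical_set_scope.

Lemma natP n : n%:R \in P.
Proof. by elim: n => [|n IH]; rewrite ?mulr0n // mulrS PD. Qed.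

Lemma nevalP q x : x \in P -> neval q x \in P.
Proof.
move=> xP; elim: q => [|c s IH]; first by rewrite neval_nil.
by rewrite neval_cons PD ?PM // natP.
Qed.

Section Cone.
Variable C : set R.
Hypotheses (CP : forall x, x \in P -> C x)
  (CD : forall x y, C x -> C y -> C (x + y))
  (CM : forall p x, p \in P -> C x -> C (p * x))
  (CN1 : ~ C (-1))
  (Ctot : forall x, C x \/ C (- x))
  (Carch : forall x, exists N : nat, C (N%:R - x)).


Lemma CMn n x : C x -> C (n%:R * x).
Proof. by apply: CM; apply: natP. Qed.

Lemma Cint (k : int) : C k%:~R -> (0 <= k)%R.
Proof.
case: k => // n; rewrite NegzE mulrNz => h; exfalso; apply: CN1.
have -> : -1 = - (n.+1%:Z)%:~R + n%:R :> R.
  by change (-1 = - (n.+1)%:R + n%:R :> R); rewrite -addn1 natrD; ring.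
by apply: CD => //; apply: CP; apply: natP.
Qed.

Definition S x : set rT := [set z | exists m : nat, exists k : int,
  [/\ (0 < m)%N, z = k%:~R / m%:R & C (m%:R * x - k%:~R)]].
Definition f x := sup (S x).

Lemma S_ub x (m : nat) (k : int) : (0 < m)%N -> C (k%:~R - m%:R * x) ->
  ubound (S x) (k%:~R / m%:R).
Proof.
move=> m0 h z [m' [k' [m'0 -> h']]].
apply: lediv => //; rewrite -subr_ge0; apply: Cint.
have -> : (k * m'%:Z - k' * m%:Z)%:~R = m'%:R * (k%:~R - m%:R * x) + m%:R * (m'%:R * x - k'%:~R) :> R.
  rewrite intrD intrN !intrM -[m%:R]/((m%:Z)%:~R) -[m'%:R]/((m'%:Z)%:~R); ring.
by apply: CD; apply: CMn.
Qed.

Lemma Sne x : S x !=set0.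
Proof.
have [N hN] := Carch (- x).
exists ((- (N%:Z))%:~R / 1%:R), 1%N, (- (N%:Z)); split => //.
by rewrite mul1r intrN opprK addrC; move: hN; rewrite opprK.
Qed.

Lemma Shas x : has_sup (S x).
Proof.
split; first exact: Sne.
have [N hN] := Carch x.
exists ((N%:Z)%:~R / 1%:R); apply: S_ub => //.
by rewrite mul1r.
Qed.

Lemma f_lb x (m : nat) (k : int) : (0 < m)%N -> C (m%:R * x - k%:~R) ->
  k%:~R / m%:R <= f x.
Proof.
move=> m0 h; apply: sup_upper_bound; first exact: Shas.
by exists m, k.
Qed.

Lemma f_ub x (m : nat) (k : int) : (0 < m)%N -> C (k%:~R - m%:R * x) ->
  f x <= k%:~R / m%:R.
Proof. by move=> m0 h; apply: ge_sup; [exact: Sne | exact: S_ub]. Qed.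

Lemma f_ge0 x : C x -> 0 <= f x.
Proof.
move=> h; have := @f_lb x 1%N 0 isT; rewrite mul0r; apply.
by rewrite mul1r subr0.
Qed.

Lemma f0 : f 0 = 0.
Proof.
apply/eqP; rewrite eq_le f_ge0 ?andbT; last by apply: CP.
have := @f_ub 0 1%N 0 isT; rewrite mul0r; apply.
by rewrite mulr0 subr0; apply: CP.
Qed.

Lemma f1 : f 1 = 1.
Proof.
apply/eqP; rewrite eq_le.
have h : C 0 by apply: CP.
have := @f_ub 1 1%N 1 isT; have := @f_lb 1 1%N 1 isT.
by rewrite !divr1 mulr1 subrr => -> // ->.
Qed.

Lemma f_super x y : f x + f y <= f (x + y).
Proof.
have key : forall z z', S x z -> S y z' -> z + z' <= f (x + y).
  move=> _ _ [m [k [m0 -> h]]] [m' [k' [m'0 -> h']]].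
  have -> : k%:~R / m%:R + k'%:~R / m'%:R = (k * m'%:Z + k' * m%:Z)%:~R / (m * m')%:R :> rT.
    rewrite intrD !intrM -[m%:R]/((m%:Z)%:~R) -[m'%:R]/((m'%:Z)%:~R) natrM.
    have hm : (m%:R : rT) != 0 by rewrite pnatr_eq0 -lt0n.
    have hm' : (m'%:R : rT) != 0 by rewrite pnatr_eq0 -lt0n.
    by field; rewrite hm hm'.
  apply: f_lb; first by rewrite muln_gt0 m0.
  have -> : (m * m')%:R * (x + y) - (k * m'%:Z + k' * m%:Z)%:~R =
     m'%:R * (m%:R * x - k%:~R) + m%:R * (m'%:R * y - k'%:~R) :> R.
    rewrite intrD !intrM -[m%:R]/((m%:Z)%:~R) -[m'%:R]/((m'%:Z)%:~R) natrM; ring.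
  by apply: CD; apply: CMn.
have h1 : forall z', S y z' -> f x <= f (x + y) - z'.
  move=> z' hz'; apply: ge_sup; first exact: Sne.
  by move=> z hz; rewrite lerBrDr; apply: key.
rewrite addrC -lerBrDr; apply: ge_sup; first exact: Sne.
by move=> z' hz'; rewrite lerBrDl -lerBrDr; apply: h1.
Qed.

Lemma f_opp x : f (- x) = - f x.
Proof.
apply/eqP; rewrite -subr_eq0 opprK eq_le; apply/andP; split.
  by have := f_super x (- x); rewrite subrr f0; lra.
rewrite leNgt; apply/negP => hlt.
have : f x < - f (- x) by lra.
move=> /dens [m [k [m0 /andP [h1 h2]]]].
case: (Ctot (m%:R * x - k%:~R)) => hC.
  by have := @f_lb _ _ _ m0 hC; lra.
have e : m%:R * (- x) - (- k)%:~R = - (m%:R * x - k%:~R) :> R by rewrite intrN mulrN opprK opprB addrC.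
have : C (m%:R * (- x) - (- k)%:~R) by rewrite e.
move=> /(@f_lb _ _ _ m0); rewrite intrN mulNr; lra.
Qed.

Lemma fD x y : f (x + y) = f x + f y.
Proof.
apply/eqP; rewrite eq_le f_super andbT.
have := f_super (x + y) (- y); rewrite addrK f_opp; lra.
Qed.

Lemma fB x y : f (x - y) = f x - f y.
Proof. by rewrite fD f_opp. Qed.

Lemma f_natM n x : f (n%:R * x) = n%:R * f x.
Proof.
elim: n => [|n IH]; first by rewrite !mul0r f0.
by rewrite mulrS mulrDl mul1r fD IH [in RHS]mulrS mulrDl mul1r.
Qed.

Lemma f_intM (k : int) x : f (k%:~R * x) = k%:~R * f x.
Proof.
case: k => n; first exact: f_natM.
by rewrite NegzE !intrN !mulNr f_opp f_natM.
Qed.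

Lemma f_Plb p y : p \in P -> f p * f y <= f (p * y).
Proof.
move=> pP.
have key : forall z, S y z -> z * f p <= f (p * y).
  move=> _ [m [k [m0 -> h]]].
  have : C (p * (m%:R * y - k%:~R)) by apply: CM.
  move=> /f_ge0.
  have -> : p * (m%:R * y - k%:~R) = m%:R * (p * y) - k%:~R * p by ring.
  rewrite fB f_natM f_intM => h'.
  have m0' : 0 < m%:R :> rT by rewrite ltr0n.
  rewrite mulrAC ler_pdivrMr //; lra.
have fp0 : 0 <= f p by apply: f_ge0; apply: CP.
have [fpz | fpp] := eqVneq (f p) 0.
  rewrite fpz mul0r; have [z hz] := Sne y; have := key z hz.
  by rewrite fpz mulr0.
have fpp' : 0 < f p by rewrite lt_neqAle eq_sym fpp.
rewrite -ler_pdivlMl //; apply: (@ge_sup _ (S y)); first exact: Sne.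
by move=> z hz; rewrite ler_pdivlMl // mulrC; apply: key.
Qed.

Lemma f_PM p y : p \in P -> f (p * y) = f p * f y.
Proof.
move=> pP; apply/eqP; rewrite eq_le f_Plb // andbT.
have := @f_Plb p (- y) pP; rewrite mulrN !f_opp; lra.
Qed.



Lemma gM x y : f (x * y) = f x * f y.
Proof.
have [p hp] := hv x.
have hP := @nevalP p v vP.
have -> : x * y = neval p v * y - (neval p v - x) * y by ring.
rewrite fB !f_PM // fB; ring.
Qed.

Lemma exists_rmorph : exists h : {rmorphism R -> rT},
  (forall x, C x -> 0 <= h x).
Proof.
have fz : zmod_morphism f by move=> x y; apply: fB.
have fm : monoid_morphism f by split; [apply: f1 | apply: gM].
exists (HB.pack_for {rmorphism R -> rT} f (GRing.isZmodMorphism.Build R rT f fz)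
                  (GRing.isMonoidMorphism.Build R rT f fm)).
by move=> x hx /=; apply: f_ge0.
Qed.

End Cone.

Lemma exprP k : v ^+ k \in P.
Proof. by elim: k => [|k IH]; rewrite ?expr0 // exprS PM. Qed.

Section Max.
Variable C0 : set R.
Hypotheses (C0P : forall x, x \in P -> C0 x)
  (C0D : forall x y, C0 x -> C0 y -> C0 (x + y))
  (C0M : forall p x, p \in P -> C0 x -> C0 (p * x))
  (C0N1 : ~ C0 (-1)).
Variables (B : seq nat) (n : nat).
Hypothesis C0E : C0 (n%:R * neval B v - (1 + v ^+ (size B).+1)).

Definition good (C : set R) : Prop :=
  [/\ (forall x, x \in P -> C x), (forall x y, C x -> C y -> C (x + y)),
      (forall p x, p \in P -> C x -> C (p * x)), ~ C (-1) & C0 `<=` C].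

Lemma good0 : good C0.
Proof. by split. Qed.

Lemma max_exists : exists C, good C /\
  (forall C', good C' -> C `<=` C' -> C' `<=` C).
Proof.
pose F := fun C : set R => C = set0 \/ good C.
have [A [FA Amax]] : exists A, F A /\ forall B, A `<` B -> ~ F B.
  apply: Zorn_bigcup => Fm FmF Fmtot.
  have gX : forall X x, Fm X -> X x -> good X.
    move=> X x FmX Xx; case: (FmF X FmX) => // X0.
    by rewrite X0 in Xx.
  have [[X0 [FmX0 gX0]] | nog] := pselect (exists X, Fm X /\ good X); last first.
    left; apply/seteqP; split => // x [X FmX Xx].
    by exfalso; apply: nog; exists X; split => //; apply: (gX X x).
  right; split.
  - by move=> x xP; exists X0 => //; case: gX0 => h _ _ _ _; apply: h.
  - move=> x y [X FmX Xx] [Y FmY Yy].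
    case: (Fmtot X Y FmX FmY) => [XY | YX].
      exists Y => //; have gY := gX Y y FmY Yy; case: gY => _ hD _ _ _.
      by apply: hD => //; apply: XY.
    exists X => //; have gX' := gX X x FmX Xx; case: gX' => _ hD _ _ _.
    by apply: hD => //; apply: YX.
  - move=> p x pP [X FmX Xx]; exists X => //.
    by have := gX X x FmX Xx; case => _ _ hM _ _; apply: hM.
  - move=> [X FmX Xx]; have := gX X _ FmX Xx; by case.
  - move=> x C0x; exists X0 => //; by case: gX0 => _ _ _ _ h; apply: h.
have gA : good A.
  case: FA => // A0; exfalso; apply: (Amax C0); last by right; exact: good0.
  rewrite A0; split; first by move=> x.
  by move=> h; have := h 0 (C0P 0 P0).
exists A; split => // C' gC' AC'; apply: contrapT => nC'A.
by apply: (Amax C'); [split | right].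
Qed.

Section MaxC.
Variable C : set R.
Hypotheses (Cg : good C)
  (Cmax : forall C', good C' -> C `<=` C' -> C' `<=` C).

Let CP : forall x, x \in P -> C x. Proof. by case: Cg. Qed.
Let CD : forall x y, C x -> C y -> C (x + y). Proof. by case: Cg. Qed.
Let CM : forall p x, p \in P -> C x -> C (p * x). Proof. by case: Cg. Qed.
Let CN1 : ~ C (-1). Proof. by case: Cg. Qed.
Let C0C : C0 `<=` C. Proof. by case: Cg. Qed.

Lemma Cid z x : C z -> C (- z) -> C (x * z).
Proof.
move=> hz hnz; have [p hp] := hv x.
have hP := @nevalP p v vP.
have -> : x * z = neval p v * z + (neval p v - x) * (- z) by ring.
by apply: CD; apply: CM.
Qed.

Lemma Ctot x : C x \/ C (- x).
Proof.
have ext : forall y, ~ C y -> exists c t, [/\ C c, t \in P & -1 = c + t * y].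
  move=> y nCy; apply: contrapT => hne; apply: nCy.
  pose Cy := fun z => exists c t, [/\ C c, t \in P & z = c + t * y].
  have gCy : good Cy.
    split.
    - by move=> z zP; exists z, 0; split => //; [apply: CP | rewrite mul0r addr0].
    - move=> z1 z2 [c1 [t1 [h1 t1P ->]]] [c2 [t2 [h2 t2P ->]]].
      exists (c1 + c2), (t1 + t2); split; [by apply: CD | by apply: PD | ring].
    - move=> p z pP [c [t [h tP ->]]].
      exists (p * c), (p * t); split; [by apply: CM | by apply: PM | ring].
    - move=> [c [t [h tP e]]]; apply: hne; by exists c, t.
    - move=> z C0z; exists z, 0; split => //; [by apply: C0C | by rewrite mul0r addr0].
  have CCy : C `<=` Cy by move=> z Cz; exists z, 0; split => //; rewrite mul0r addr0.
  have hy : Cy y by exists 0, 1; split => //; [by apply: CP | by rewrite add0r mul1r].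
  exact: (Cmax _ gCy CCy y hy).
apply: contrapT => hn.
have [c1 [t1 [h1 t1P e1]]] := ext x (fun h => hn (or_introl h)).
have [c2 [t2 [h2 t2P e2]]] := ext (- x) (fun h => hn (or_intror h)).
have hs : C (- (t1 + t2)).
  have -> : - (t1 + t2) = t2 * c1 + t1 * c2.
    have ec1 : c1 = -1 - t1 * x by rewrite e1 addrK.
    have ec2 : c2 = -1 - t2 * (- x) by rewrite e2 addrK.
    rewrite ec1 ec2; ring.
  by apply: CD; apply: CM.
have ht1 : C (- t1).
  have -> : - t1 = t2 + - (t1 + t2) by ring.
  by apply: CD => //; apply: CP.
have hx := Cid t1 x (CP t1 t1P) ht1.
apply: CN1; rewrite e1 mulrC; by apply: CD.
Qed.

Lemma Csat m x : (0 < m)%N -> C (m%:R * x) -> C x.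
Proof.
move=> m0 hm.
pose Cm := fun z => C (m%:R * z).
have gCm : good Cm.
  split.
  - by move=> z zP; apply: CP; apply: PM => //; apply: natP.
  - by move=> z1 z2 h1 h2; rewrite /Cm mulrDr; apply: CD.
  - move=> p z pP h; rewrite /Cm mulrCA; by apply: CM.
  - rewrite /Cm => h; apply: CN1.
    have -> : -1 = m%:R * (-1) + (m.-1)%:R :> R.
      by rewrite -{1}(prednK m0) mulrS; ring.
    by apply: CD => //; apply: CP; apply: natP.
  - by move=> z C0z; rewrite /Cm; apply: CM; [apply: natP | apply: C0C].
apply: (Cmax _ gCm _ x hm) => z Cz; rewrite /Cm; apply: CM => //; apply: natP.
Qed.

Lemma vpow1 N : C (v - N%:R) -> (0 < N)%N -> forall k, C (v ^+ k - 1).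
Proof.
move=> hN N0; elim=> [|k IH]; first by rewrite expr0 subrr; apply: CP.
have -> : v ^+ k.+1 - 1 = v ^+ k * (v - N%:R) + (N.-1)%:R * v ^+ k + (v ^+ k - 1).
  by rewrite -{1}(prednK N0) mulrS exprS; ring.
apply: CD => //; apply: CD; first by apply: CM => //; apply: exprP.
by apply: CP; apply: PM; [apply: natP | apply: exprP].
Qed.

Lemma vpowN N : C (v - N%:R) -> (0 < N)%N -> forall k, C (v ^+ k.+1 - N%:R).
Proof.
move=> hN N0 k.
have -> : v ^+ k.+1 - N%:R = v ^+ k * (v - N%:R) + N%:R * (v ^+ k - 1).
  by rewrite exprS; ring.
apply: CD; first by apply: CM => //; apply: exprP.
by apply: CM; [apply: natP | exact: (@vpow1 N hN N0)].
Qed.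

Lemma vsum N : C (v - N%:R) -> (0 < N)%N -> forall s j, (size s <= j)%N ->
  C ((sumn s)%:R * v ^+ j - N%:R * neval s v).
Proof.
move=> hN N0; elim=> [|c s IH] j hj.
  by rewrite neval_nil /= mul0r mulr0 subrr; apply: CP.
case: j hj => // j hj.
have -> : (sumn (c :: s))%:R * v ^+ j.+1 - N%:R * neval (c :: s) v =
   c%:R * (v ^+ j.+1 - N%:R) + v * ((sumn s)%:R * v ^+ j - N%:R * neval s v).
  by rewrite neval_cons /= natrD exprS; ring.
apply: CD; first by apply: CM; [apply: natP | exact: (@vpowN N hN N0)].
by apply: CM => //; apply: IH.
Qed.

Lemma Cvb : exists N : nat, C (N%:R - v).
Proof.
apply: contrapT => hn.
pose M := (n * sumn B)%N; pose N := M.+1.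
have hvN : C (v - N%:R).
  case: (Ctot (N%:R - v)) => h; first by exfalso; apply: hn; exists N.
  by rewrite opprB in h.
have h1 := @vsum N hvN isT B _ (leqnSn (size B)).
have h2 : C (n%:R * ((sumn B)%:R * v ^+ (size B).+1 - N%:R * neval B v)).
  by apply: CM => //; apply: natP.
have h3 : C (N%:R * (n%:R * neval B v - (1 + v ^+ (size B).+1))).
  by apply: CM; [apply: natP | apply: C0C].
have h4 : C (v ^+ (size B).+1) by apply: CP; apply: exprP.
have h5 : C (M%:R) by apply: CP; apply: natP.
apply: CN1.
have -> : -1 = n%:R * ((sumn B)%:R * v ^+ (size B).+1 - N%:R * neval B v)
   + N%:R * (n%:R * neval B v - (1 + v ^+ (size B).+1))
   + v ^+ (size B).+1 + M%:R.
  by rewrite /N mulrS /M natrM; ring.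
by apply: CD => //; apply: CD => //; apply: CD.
Qed.

Lemma CarchM x : exists N : nat, C (N%:R - x).
Proof.
have [N hN] := Cvb; have [p hp] := hv x.
have key : forall q, exists K : nat,
    neval q (N%:R : R) = K%:R /\ C (neval q (N%:R : R) - neval q v).
  elim=> [|c s [K [eK hK]]].
    by exists 0%N; rewrite !neval_nil subrr; split => //; apply: CP.
  exists (c + N * K)%N; rewrite !neval_cons eK natrD natrM; split => //.
  have -> : c%:R + N%:R * K%:R - (c%:R + v * neval s v) =
     N%:R * (neval s (N%:R : R) - neval s v) + neval s v * (N%:R - v).
    by rewrite eK; ring.
  apply: CD; first by apply: CM => //; apply: natP.
  by apply: CM => //; apply: nevalP.
have [K [eK hK]] := key p.
exists K; rewrite -eK.
have -> : neval p (N%:R : R) - x = (neval p N%:R - neval p v) + (neval p v - x) by ring.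
by apply: CD => //; apply: CP.
Qed.

End MaxC.

Lemma rep : exists h : {rmorphism R -> rT}, forall x, C0 x -> 0 <= h x.
Proof.
have [C [Cg Cmax]] := max_exists.
case: (Cg) => CP CD CM CN1 C0C.
have [h hh] := @exists_rmorph C CP CD CM CN1 (@Ctot C Cg Cmax) (@CarchM C Cg Cmax).
by exists h => x /C0C; apply: hh.
Qed.
End Max.

End Main.

Lemma neval_q0 (S : comPzSemiRingType) k (x : S) :
  neval (1%N :: rcons (nseq k 0%N) 1%N) x = 1 + x ^+ k.+1.
Proof.
have h : forall k, neval (rcons (nseq k 0%N) 1%N) x = x ^+ k.
  elim=> [|m IH]; first by rewrite /= neval_cons neval_nil mulr0 addr0 expr0.
  by rewrite /= neval_cons IH add0r exprS.
by rewrite neval_cons h exprS.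
Qed.

Theorem theorem4p4 (R : comNzRingType) (rT : realType) (P : {pred R})
  (charR0 : forall n : nat, n%:R = 0 :> R -> n = 0%N)
  (P0 : 0 \in P) (P1 : 1 \in P)
  (PD : forall x y, x \in P -> y \in P -> x + y \in P)
  (PM : forall x y, x \in P -> y \in P -> x * y \in P)
  (v : R) (vP : v \in P)
  (hv : forall a : R, exists p : seq nat, neval p v - a \in P)
  (a : R) :
  (forall f : {rmorphism R -> rT}, (forall x, x \in P -> 0 <= f x) -> 0 <= f a)
  <->
  (forall r : rT, 0 <= r -> forall eps : rT, 0 < eps ->
     exists q : seq nat, exists w : R, exists n : nat,
       [/\ w \in P, (0 < n)%N, neval q r <= eps * n%:R
         & (1 + w) * (n%:R * a + neval q v) \in P]).
Proof.
split.
- move=> H1 r r0 eps eps0.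
  have [B hB] := hv (- a).
  pose j := (size B).+1.
  pose n := (Num.bound ((1 + r ^+ j) / eps)).+1.
  have hn : 1 + r ^+ j <= eps * n%:R.
    have hb : (1 + r ^+ j) / eps < (Num.bound ((1 + r ^+ j) / eps))%:R.
      apply: archi_boundP; apply: divr_ge0; last exact: ltW.
      by apply: addr_ge0 => //; apply: exprn_ge0.
    rewrite mulrC -ler_pdivrMr //; apply: (le_trans (ltW hb)).
    by rewrite ler_nat /n.
  pose q0 := 1%N :: rcons (nseq (size B) 0%N) 1%N.
  pose y0 := n%:R * a + neval q0 v.
  have natP' := @natP R P P0 P1 PD.
  have nevalP' := @nevalP R P P0 P1 PD PM.
  pose C0 := fun x => exists p t, [/\ p \in P, t \in P & x = p - t * y0].
  have C0P : forall x, x \in P -> C0 x.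
    by move=> x xP; exists x, 0; split => //; rewrite mul0r subr0.
  have C0D : forall x y, C0 x -> C0 y -> C0 (x + y).
    move=> _ _ [p1 [t1 [h1 h1' ->]]] [p2 [t2 [h2 h2' ->]]].
    exists (p1 + p2), (t1 + t2); split; [exact: PD | exact: PD | ring].
  have C0M : forall p x, p \in P -> C0 x -> C0 (p * x).
    move=> p _ pP [p1 [t1 [h1 h1' ->]]].
    exists (p * p1), (p * t1); split; [exact: PM | exact: PM | ring].
  have [hm1 | hm1] := pselect (C0 (-1)).
    case: hm1 => p [t [pP tP e]].
    have [B' hB'] := hv (- y0).
    exists q0, (t * neval B' v), n; split => //.
    + by apply: PM => //; apply: nevalP'.
    + by rewrite /q0 neval_q0.
    + have e' : t * y0 = 1 + p.
        have -> : 1 + p = 1 + (p - t * y0) + t * y0 by ring.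
        by rewrite -e subrr add0r.
      have -> : (1 + t * neval B' v) * (n%:R * a + neval q0 v) =
          (neval B' v - - y0) + neval B' v * p.
        have -> : (1 + t * neval B' v) * (n%:R * a + neval q0 v) =
           y0 + neval B' v * (t * y0) by rewrite /y0; ring.
        by rewrite e'; ring.
      by apply: PD => //; apply: PM => //; apply: nevalP'.
  have C0E : C0 (n%:R * neval B v - (1 + v ^+ (size B).+1)).
    exists (n%:R * (neval B v - - a)), 1; split => //.
      by apply: PM => //; apply: natP'.
    by rewrite /y0 /q0 neval_q0; ring.
  have [h hh] := @rep R rT P P0 P1 PD PM v vP hv C0 C0P C0D C0M hm1 B n C0E.
  have ha := H1 h (fun x xP => hh x (C0P x xP)).
  have hy : C0 (- y0) by exists 0, 1; split => //; ring.
  have := hh _ hy.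
  rewrite rmorphN rmorphD rmorphM rmorph_nat neval_rmorph /q0 neval_q0.
  have hvp : 0 <= h v by apply: hh; apply: C0P.
  have : 0 <= (h v) ^+ (size B).+1 by apply: exprn_ge0.
  have : 0 <= n%:R * h a by apply: mulr_ge0.
  lra.
- move=> H2 f hf; rewrite leNgt; apply/negP => fa0.
  have r0 : 0 <= f v by apply: hf.
  have e0 : 0 < - f a / 2 by lra.
  have [q [w [n [wP n0 hq hP]]]] := H2 (f v) r0 _ e0.
  have := hf _ hP.
  rewrite rmorphM rmorphD rmorph1 rmorphD rmorphM rmorph_nat neval_rmorph.
  have fw : 0 < 1 + f w by have := hf w wP; lra.
  rewrite pmulr_rge0 // => h1.
  have : 0 <= n%:R * f a / 2.
    have e : - f a / 2 * n%:R = - (n%:R * f a / 2) by ring.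
    lra.
  have n0' : 0 < n%:R :> rT by rewrite ltr0n.
  rewrite -mulrA pmulr_rge0 //; lra.
Qed.
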